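(* Let $f:\Omega\to[0,M]$ be weakly canalizing with respect to coordinate $j$ and $(a,b)\in\Omega_j\times\mathbb{R}$, where $k_j\ge2$. Let $f'=f\restriction_{x_j\ne a}$, defined on $\Omega'=\Omega_1\times\cdots\times(\Omega_j\setminus\{a\})\times\cdots\times\Omega_n$. Then $$\operatorname{AS}[f]\le \frac{M^2}{4}+\frac{k_j-1}{k_j}\,\operatorname{AS}[f'],$$ where $\operatorname{AS}[f']$ is computed on the product $\Omega'$ with its own uniform product measure.
   Context: Let $\Omega_1,\ldots,\Omega_n$ be finite sets with $|\Omega_i|=k_i\ge1$, and $\Omega=\prod_i\Omega_i$ with the uniform product probability measure. Weakly canalizing: $f$ is weakly canalizing with respect to $j$ and $(a,b)$ if $f(x)=b$ for all $x\in\Omega$ with $x_j=a$. Influence and average sensitivity: for a product $\Pi=\prod_i P_i$ of finite nonempty sets with the uniform product measure and $g:\Pi\to\mathbb{R}$, let $\operatorname{Var}_i[g](x)$ be the variance of $y_i\mapsto g(x_1,\ldots,x_{i-1},y_i,x_{i+1},\ldots,x_n)$ for $y_i$ uniform on $P_i$. Then: - $\operatorname{Inf}_i[g]=\mathbf{E}_x[\operatorname{Var}_i[g](x)]$; - $\operatorname{AS}[g]=\sum_{i=1}^n\operatorname{Inf}_i[g]$. *)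

(* Defs.v *)
From mathcomp Require Import all_boot all_order all_algebra.
Set Implicit Arguments. Unset Strict Implicit. Unset Printing Implicit Defensive.
Import Order.TTheory GRing.Theory Num.Theory.
Local Open Scope ring_scope.

(* A finite product Pi = prod_{i < n} P i of finite sets P i, all drawn from a
   common finite ambient type T; points are x : {ffun 'I_n -> T} with x i \in P i. *)
Section Prod.
Variables (T : finType) (n : nat) (R : realFieldType).

Definition inprod (P : 'I_n -> {set T}) (x : {ffun 'I_n -> T}) : bool :=
  [forall i, x i \in P i].

Definition prodset (P : 'I_n -> {set T}) : {set {ffun 'I_n -> T}} :=
  [set x | inprod P x].

Definition Eprod (P : 'I_n -> {set T}) (g : {ffun 'I_n -> T} -> R) : R :=
  (\sum_(x in prodset P) g x) / #|prodset P|%:R.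

Definition upd (x : {ffun 'I_n -> T}) (i : 'I_n) (y : T) : {ffun 'I_n -> T} :=
  [ffun k => if k == i then y else x k].

Definition mean_i (P : 'I_n -> {set T}) (g : {ffun 'I_n -> T} -> R)
    (i : 'I_n) (x : {ffun 'I_n -> T}) : R :=
  (\sum_(y in P i) g (upd x i y)) / #|P i|%:R.

Definition Var_i (P : 'I_n -> {set T}) (g : {ffun 'I_n -> T} -> R)
    (i : 'I_n) (x : {ffun 'I_n -> T}) : R :=
  (\sum_(y in P i) (g (upd x i y) - mean_i P g i x) ^+ 2) / #|P i|%:R.

Definition Inf (P : 'I_n -> {set T}) (g : {ffun 'I_n -> T} -> R) (i : 'I_n) : R :=
  Eprod P (Var_i P g i).

Definition AS (P : 'I_n -> {set T}) (g : {ffun 'I_n -> T} -> R) : R :=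
  \sum_(i < n) Inf P g i.

Definition weakly_canalizing (P : 'I_n -> {set T}) (f : {ffun 'I_n -> T} -> R)
    (j : 'I_n) (a : T) (b : R) : Prop :=
  forall x, inprod P x -> x j = a -> f x = b.

Definition remove_at (P : 'I_n -> {set T}) (j : 'I_n) (a : T) : 'I_n -> {set T} :=
  fun i => if i == j then P j :\ a else P i.

End Prod.

(* Main.v *)
Require Import Defs.
From mathcomp Require Import all_boot all_order all_algebra.
From mathcomp Require Import ring lra.
Import Order.TTheory GRing.Theory Num.Theory.
Local Open Scope ring_scope.

Lemma sum_sq_le (R : realFieldType) (I : finType) (A : {set I}) (h : I -> R) (c : R) :
  (0 < #|A|)%N ->
  \sum_(y in A) (h y - (\sum_(z in A) h z) / #|A|%:R) ^+ 2 <= \sum_(y in A) (h y - c) ^+ 2.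
Proof.
move=> A0.
set S := \sum_(z in A) h z. set m := S / #|A|%:R.
rewrite -subr_ge0 -sumrB.
have E : forall y, (h y - c) ^+ 2 - (h y - m) ^+ 2 = (m - c) * (2 * h y) - (m - c) * (m + c).
  by move=> y; ring.
rewrite (eq_bigr _ (fun y _ => E y)) sumrB -mulr_sumr -mulr_sumr sumr_const.
have kS : #|A|%:R * m = S.
  rewrite /m mulrC -mulrA mulVf ?mulr1 //. by rewrite pnatr_eq0 -lt0n.
rewrite -/S.
rewrite -[X in _ - X]mulr_natr.
have -> : (m - c) * (2 * S) - (m - c) * (m + c) * #|A|%:R
   = #|A|%:R * ((m - c) ^+ 2) by rewrite -kS; ring.
apply: mulr_ge0; [exact: ler0n | exact: sqr_ge0].
Qed.

Lemma var_le (R : realFieldType) (T : finType) (n : nat) (P : 'I_n -> {set T})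
  (g : {ffun 'I_n -> T} -> R) (i : 'I_n) (x : {ffun 'I_n -> T}) (M : R) :
  (0 < #|P i|)%N -> (forall y, y \in P i -> 0 <= g (upd x i y) <= M) ->
  Var_i P g i x <= M ^+ 2 / 4%:R.
Proof.
move=> k0 H; rewrite /Var_i /mean_i.
have kp : 0 < #|P i|%:R :> R by rewrite ltr0n.
rewrite ler_pdivrMr //.
apply: le_trans (@sum_sq_le _ _ _ (fun y => g (upd x i y)) (M / 2%:R) k0) _.
apply: le_trans (_ : \sum_(y in P i) M ^+ 2 / 4%:R <= _).
  apply: ler_sum => y yP. have /andP[h1 h2] := H y yP. nra.
by rewrite sumr_const mulr_natr.
Qed.

Lemma card_prodset (T : finType) (n : nat) (P : 'I_n -> {set T}) :
  #|prodset P| = (\prod_(i < n) #|P i|)%N.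
Proof.
have := card_family (fun i : 'I_n => mem (P i)).
rewrite foldrE big_map big_enum /= => <-.
apply: eq_card => x. rewrite !inE /inprod. apply/forallP/familyP => H i; exact: H.
Qed.

Lemma upd_in (T : finType) (n : nat) (P : 'I_n -> {set T}) x i y :
  inprod P x -> y \in P i -> inprod P (upd x i y).
Proof.
move=> /forallP H yP; apply/forallP => l; rewrite ffunE.
case: eqP => [->|] //; exact: H.
Qed.

Lemma var_ge0 (R : realFieldType) (T : finType) (n : nat) (P : 'I_n -> {set T})
  (g : {ffun 'I_n -> T} -> R) i x : 0 <= Var_i P g i x.
Proof. apply: divr_ge0; last exact: ler0n. apply: sumr_ge0 => y _; exact: sqr_ge0. Qed.

Theorem mainTheorem4 (R : realFieldType) (T : finType) (n : nat)
  (P : 'I_n -> {set T}) (f : {ffun 'I_n -> T} -> R) (M : R)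
  (j : 'I_n) (a : T) (b : R) :
  (forall i, 0 < #|P i|)%N ->
  (2 <= #|P j|)%N ->
  a \in P j ->
  (forall x, inprod P x -> 0 <= f x <= M) ->
  weakly_canalizing P f j a b ->
  AS P f <= M ^+ 2 / 4%:R
            + ((#|P j|%:R - 1) / #|P j|%:R) * AS (remove_at P j a) f.
Proof.
move=> Pgt0 k2 aP fM wc.
set P' := remove_at P j a.
set k := #|P j|.
set Q := (\prod_(i < n | i != j) #|P i|)%N.
have Q0 : (0 < Q)%N by apply: prodn_gt0.
have cP : #|prodset P| = (k * Q)%N by rewrite card_prodset (bigD1 j).
have cP' : #|prodset P'| = ((k - 1) * Q)%N.
  rewrite card_prodset (bigD1 j) //=; congr (_ * _)%N.
    by rewrite /P' /remove_at /= eqxx /k (cardsD1 a (P j)) aP add1n subn1.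
  by apply: eq_bigr => i ij; rewrite /P' /remove_at (negbTE ij).
have kR : (k%:R : R) != 0 by rewrite pnatr_eq0 -lt0n; apply: leq_trans k2.
have k1R : (k%:R - 1 : R) != 0.
  have -> : (k%:R - 1 : R) = (k - 1)%:R by rewrite natrB //; apply: leq_trans k2.
  by rewrite pnatr_eq0 subn_eq0 -ltnNge.
have QR : (Q%:R : R) != 0 by rewrite pnatr_eq0 -lt0n.
have c0 : 0 <= (k%:R - 1) / k%:R :> R.
  apply: divr_ge0; last exact: ler0n.
  by rewrite subr_ge0 ler1n; apply: leq_trans k2.
have Ij : Inf P f j <= M ^+ 2 / 4%:R.
  rewrite /Inf /Eprod.
  have pos : 0 < #|prodset P|%:R :> R by rewrite cP ltr0n muln_gt0 Q0 andbT; apply: leq_trans k2.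
  rewrite ler_pdivrMr //.
  apply: le_trans (_ : \sum_(x in prodset P) M ^+ 2 / 4%:R <= _).
    apply: ler_sum => x xP; apply: var_le => // y yP.
    apply: fM; apply: upd_in => //; by move: xP; rewrite inE.
  by rewrite sumr_const mulr_natr.
have I'j : 0 <= Inf P' f j.
  apply: divr_ge0; last exact: ler0n.
  apply: sumr_ge0 => x _; exact: var_ge0.
have Ii : forall i, i != j -> Inf P f i = (k%:R - 1) / k%:R * Inf P' f i.
  move=> i ij.
  rewrite /Inf /Eprod cP' cP.
  have -> : \sum_(x in prodset P) Var_i P f i x = \sum_(x in prodset P') Var_i P' f i x.
    rewrite (bigID (fun x : {ffun 'I_n -> T} => x j == a)) /= big1 ?add0r.
      apply: eq_big => x.
        rewrite !inE /inprod; apply/andP/forallP.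
          move=> [/forallP H xa] l; rewrite /P' /remove_at.
          case: eqP => [->|_]; last exact: H.
          by rewrite in_setD1 xa H.
        move=> H; split.
          apply/forallP => l; have := H l; rewrite /P' /remove_at.
          by case: eqP => [->|_] //; rewrite in_setD1 => /andP[].
        by have := H j; rewrite /P' /remove_at eqxx in_setD1 => /andP[].
      by move=> _; rewrite /Var_i /mean_i /P' /remove_at (negbTE ij).
    move=> x /andP[]; rewrite inE => xP /eqP xa.
    have fb : forall y, y \in P i -> f (upd x i y) = b.
      move=> y yP; apply: wc; first exact: upd_in.
      by rewrite ffunE eq_sym (negbTE ij).
    rewrite /Var_i /mean_i (eq_bigr (fun _ => b) fb) sumr_const -[b *+ _]mulr_natr.
    rewrite mulfK ?pnatr_eq0 -?lt0n //.
    by rewrite big1 ?mul0r // => y yP; rewrite fb // subrr expr2 mul0r.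
  rewrite !natrM natrB; last by apply: leq_trans k2.
  by field; rewrite kR k1R QR.
rewrite /AS (bigD1 j) //= [X in _ <= _ + _ * X](bigD1 j) //=.
rewrite (eq_bigr (fun i => (k%:R - 1) / k%:R * Inf P' f i)) -?mulr_sumr; last first.
  by move=> i ij; apply: Ii.
rewrite mulrDr.
have h : 0 <= (k%:R - 1) / k%:R * Inf P' f j by apply: mulr_ge0.
lra.
Qed.
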